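(* Let $X$ be a finite dimensional Banach space with $n(X)>0$. Then $X$ has the $\mathbf{L}_{p,p}$-nu.
   Context: Let $X$ be a Banach space over $\mathbb{K}\in\{\mathbb{R},\mathbb{C}\}$, $\mathcal{L}(X)$ the bounded linear operators on $X$. $\Pi(X)=\{(x,x^* )\in S_X\times S_{X^*}: x^*(x)=1\}$; $v(T)=\sup\{|x^*(Tx)|:(x,x^* )\in\Pi(X)\}$; $n(X)=\inf\{v(T): T\in\mathcal{L}(X),\ \|T\|=1\}$. $X$ has the $\mathbf{L}_{p,p}$-nu if for every $\varepsilon>0$ and $(x,x^* )\in\Pi(X)$ there is $\eta(\varepsilon,(x,x^* ))>0$ such that whenever $T\in\mathcal{L}(X)$ with $v(T)=1$ satisfies $|x^*(Tx)|>1-\eta(\varepsilon,(x,x^* ))$, there is $S\in\mathcal{L}(X)$ with $v(S)=1$, $|x^*(Sx)|=1$ and $\|S-T\|<\varepsilon$. *)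

(* Defs.v *)
From HB Require Import structures.
From mathcomp Require Import all_boot all_order all_algebra.
From mathcomp Require Import all_classical all_reals all_analysis.
From mathcomp Require Import complex.
Set Implicit Arguments. Unset Strict Implicit. Unset Printing Implicit Defensive.
Import Order.TTheory GRing.Theory Num.Theory.
Import numFieldNormedType.Exports.
Local Open Scope classical_set_scope.
Local Open Scope ring_scope.

(* In the
   theorem K is instantiated to R and to R[i] = complex R for R : realType. *)

Definition is_sup (K : numFieldType) (S : set K) (s : K) : Prop :=
  (forall y, S y -> y <= s) /\ (forall e, 0 < e -> exists2 y, S y & s - e < y).

Definition bounded_linear (K : numFieldType) (V W : normedModType K)
  (T : V -> W) : Prop :=
  (forall (a : K) (x y : V), T (a *: x + y) = a *: T x + T y) /\
  (exists c : K, forall x, `|T x| <= c * `|x|).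

Definition opnorm_is (K : numFieldType) (V W : normedModType K)
  (T : V -> W) (s : K) : Prop :=
  is_sup [set `|T x| | x in [set x : V | `|x| <= 1]] s.

(* Pi(X) = {(x, x^* ) in S_X x S_{X^*} : x^*(x) = 1};
   elements of X^* are bounded linear functionals V -> K (= K^o). *)
Definition Pi (K : numFieldType) (V : normedModType K) : set (V * (V -> K^o)) :=
  [set p : V * (V -> K^o) | `|p.1| = 1 /\ bounded_linear p.2 /\
     opnorm_is p.2 (1 : K) /\ (p.2 p.1 : K) = 1].

Definition numrad_is (K : numFieldType) (V : normedModType K)
  (T : V -> V) (s : K) : Prop :=
  is_sup [set `|p.2 (T p.1)| | p in @Pi K V] s.

(* n(X) > 0, i.e. inf { v(T) : T in L(X), ||T|| = 1 } > 0 (with inf of the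
   empty set = +oo): some c > 0 is a lower bound of that set. *)
Definition numindex_pos (K : numFieldType) (V : normedModType K) : Prop :=
  exists2 c : K, 0 < c &
    forall (T : V -> V) (s : K),
      bounded_linear T -> opnorm_is T 1 -> numrad_is T s -> c <= s.

Definition Lpp_nu (K : numFieldType) (V : normedModType K) : Prop :=
  forall (eps : K), 0 < eps ->
  forall p, @Pi K V p ->
  exists2 eta : K, 0 < eta &
    forall T : V -> V, bounded_linear T -> numrad_is T 1 ->
      1 - eta < `|p.2 (T p.1)| ->
      exists S : V -> V, [/\ bounded_linear S, numrad_is S 1,
        `|p.2 (S p.1)| = 1 &
        exists2 s : K, opnorm_is (fun x => S x - T x) s & s < eps].

Definition finite_dim (K : numFieldType) (V : normedModType K) : Prop :=
  exists (n : nat) (e : 'I_n -> V),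
    forall x : V, exists c : 'I_n -> K, x = \sum_(i < n) c i *: e i.

(* Main.v *)
Require Import Defs.
From HB Require Import structures.
From mathcomp Require Import all_boot all_order all_algebra.
From mathcomp Require Import all_classical all_reals all_analysis.
From mathcomp Require Import complex.
From mathcomp Require Import ring lra.
Import Order.TTheory GRing.Theory Num.Theory.
Import numFieldNormedType.Exports.
Local Open Scope ring_scope.
Set Implicit Arguments. Unset Strict Implicit. Unset Printing Implicit Defensive.

Lemma zid (V : zmodType) (A u v w z : V) :
  A - (u + v) = (A - (w + z)) - ((u - w) + (v - z)).
Proof.
have -> : (u - w) + (v - z) = (u + v) - (w + z) by rewrite opprD addrACA.
by rewrite opprB addrA subrK.
Qed.

Section Gen.
Variables (R : realType) (K : numFieldType) (io : {rmorphism R -> K}) (nrm : K -> R).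
Hypothesis hle : forall a b, (io a <= io b) = (a <= b).
Hypothesis hn : forall k, io (nrm k) = `|k|.

Lemma hlt a b : (io a < io b) = (a < b).
Proof. by rewrite !lt_def hle (inj_eq (fmorph_inj io)). Qed.

Lemma io_inj : injective io. Proof. exact: fmorph_inj. Qed.

Lemma nrm_ge0 k : 0 <= nrm k.
Proof. by rewrite -hle rmorph0 hn. Qed.

Lemma nrm_le a b : (nrm a <= nrm b) = (`|a| <= `|b|).
Proof. by rewrite -hle !hn. Qed.

Lemma nrm_lt a b : (nrm a < nrm b) = (`|a| < `|b|).
Proof. by rewrite -hlt !hn. Qed.

Lemma nrmD a b : nrm (a + b) <= nrm a + nrm b.
Proof. by rewrite -hle rmorphD !hn ler_normD. Qed.

Lemma nrmM a b : nrm (a * b) = nrm a * nrm b.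
Proof. by apply: io_inj; rewrite rmorphM !hn normrM. Qed.

Lemma nrmN a : nrm (- a) = nrm a.
Proof. by apply: io_inj; rewrite !hn normrN. Qed.

Lemma nrm_io r : nrm (io r) = `|r|.
Proof.
apply: io_inj; rewrite hn; have [r0|r0] := leP 0 r.
  by rewrite (ger0_norm r0) ger0_norm // -(rmorph0 io) hle.
rewrite (ltr0_norm r0) ltr0_norm ?rmorphN //.
by rewrite -(rmorph0 io) hlt.
Qed.

Lemma nrm_eq0 a : (nrm a == 0) = (a == 0).
Proof. by rewrite -[a == 0]normr_eq0 -[`|a|]hn -(rmorph0 io) (inj_eq io_inj). Qed.

Lemma nrm_pos k : 0 < k -> k = io (nrm k).
Proof. by move=> k0; rewrite hn gtr0_norm. Qed.

Lemma norm_io r : `|io r| = io `|r|.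
Proof. by rewrite -hn nrm_io. Qed.

Lemma nrm1 : nrm 1 = 1.
Proof. by rewrite -(rmorph1 io) nrm_io normr1. Qed.

Section V.
Variable V : normedModType K.
Definition N (x : V) := nrm `|x|.
Lemma N_ge0 x : 0 <= N x. Proof. exact: nrm_ge0. Qed.
Lemma ND x y : N (x + y) <= N x + N y.
Proof. rewrite /N -hle rmorphD !hn !normr_id; exact: ler_normD. Qed.
Lemma NZ a x : N (a *: x) = nrm a * N x.
Proof. by apply: io_inj; rewrite /N rmorphM !hn !normr_id normrZ. Qed.
Lemma NN x : N (- x) = N x. Proof. by rewrite /N normrN. Qed.
Lemma NB x y : N (x - y) <= N x + N y.
Proof. by rewrite -(NN y) ND. Qed.
Lemma N_eq0 x : (N x == 0) = (x == 0).
Proof. by rewrite /N nrm_eq0 normr_eq0. Qed.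
Lemma NE x : `|x| = io (N x).
Proof. by rewrite /N hn normr_id. Qed.
Lemma N0 : N 0 = 0. Proof. by apply/eqP; rewrite N_eq0. Qed.
Lemma N_sum (I : Type) (s : seq I) (F : I -> V) :
  N (\sum_(i <- s) F i) <= \sum_(i <- s) N (F i).
Proof.
elim: s => [|a s IH]; first by rewrite !big_nil N0.
rewrite !big_cons; apply: le_trans (ND _ _) _; exact: lerD.
Qed.
Definition L m (f : 'I_m -> V) (c : 'I_m -> R) := \sum_(i < m) io (c i) *: f i.

Lemma L_bound m (f : 'I_m -> V) c : N (L f c) <= \sum_(i < m) `|c i| * N (f i).
Proof.
apply: le_trans (N_sum _ _) _; apply: ler_sum => i _.
by rewrite NZ nrm_io.
Qed.

Lemma LB m (f : 'I_m -> V) c d : L f (fun i => c i - d i) = L f c - L f d.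
Proof.
rewrite /L -sumrB; apply: eq_bigr => i _; by rewrite rmorphB scalerBl.
Qed.

Lemma LZ m (f : 'I_m -> V) a c : L f (fun i => a * c i) = io a *: L f c.
Proof.
rewrite /L scaler_sumr; apply: eq_bigr => i _; by rewrite rmorphM scalerA.
Qed.
End V.

Lemma rV_entry_le m (v : 'rV[R]_m) i : `|v ord0 i| <= `|v|.
Proof.
rewrite [leRHS]/Num.norm /= mx_normrE; apply/bigmax_geP; right => /=.
by exists (ord0, i).
Qed.

Lemma lip_cont m (h : 'rV[R]_m -> R) (C : R) : 0 <= C ->
  (forall u v, `|h u - h v| <= C * `|u - v|) -> continuous h.
Proof.
move=> C0 hl x A /nbhs_ballP[e e0 eA]; apply/nbhs_ballP.
exists (e / (C + 1)); first by rewrite /= divr_gt0 // ltr_wpDl.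
move=> y; rewrite -ball_normE /= => xy; apply: eA; rewrite -ball_normE /=.
apply: le_lt_trans (hl x y) _.
apply: le_lt_trans (_ : C * `|x - y| <= (C + 1) * `|x - y|) _.
  by rewrite ler_wpM2r // lerDl.
by rewrite mulrC -ltr_pdivlMr // ltr_wpDl.
Qed.


Section Coord.
Variable V : normedModType K.

Lemma NB_ge (x y : V) : N x - N y <= N (x - y).
Proof. by rewrite lerBlDr; apply: le_trans (ND _ _); rewrite subrK. Qed.

Lemma indep_bound m (f : 'I_m.+1 -> V) :
  (forall c, L f c = 0 -> forall i, c i = 0) ->
  exists2 b : R, 0 < b & forall d i, `|d i| <= b * N (L f d).
Proof.
move=> indep.
pose h (v : 'rV[R]_m.+1) := N (L f (fun i => v ord0 i)).
pose Fs := \sum_(i < m.+1) N (f i).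
have Fs0 : 0 <= Fs by apply: sumr_ge0 => i _; exact: N_ge0.
have hl u v : `|h u - h v| <= Fs * `|u - v|.
  have key : forall u v, h u - h v <= Fs * `|u - v|.
    move=> u' v'; apply: le_trans (NB_ge _ _) _; rewrite -LB.
    apply: le_trans (L_bound _ _) _; rewrite /Fs mulr_suml.
    apply: ler_sum => i _; rewrite mulrC; apply: ler_wpM2l; first exact: N_ge0.
    by have := rV_entry_le (u' - v') i; rewrite !mxE.
  rewrite ler_norml key andbT lerNl opprB.
  by apply: le_trans (key v u) _; rewrite distrC.
have hc : continuous h := lip_cont Fs0 hl.
pose Sph := [set v : 'rV[R]_m.+1 | `|v| = 1]%classic.
have Sph_cl : closed Sph.
  apply: (@preimage_closed _ _ (fun v : 'rV[R]_m.+1 => `|v|) [set 1]%classic).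
    by move=> v _; exact: norm_continuous.
  exact: closed_eq.
have Sph_co : compact Sph.
  apply: bounded_closed_compact => //.
  exists 1; split => // x x1 v /= ->; exact: ltW.
have Sph_ne : (Sph !=set0)%classic.
  pose u : 'rV[R]_m.+1 := const_mx 1.
  have u0 : `|u| != 0.
    rewrite normr_eq0; apply/eqP => /matrixP/(_ ord0 ord0); rewrite !mxE.
    by move/eqP; rewrite oner_eq0.
  exists (`|u|^-1 *: u); rewrite /Sph /= normrZ ger0_norm ?invr_ge0 //.
  by rewrite mulVf.
have [c0 /set_mem Sc0 c0min] := compact_EVT_min Sph_ne Sph_co (continuous_subspaceT hc).
have al0 : 0 < h c0.
  rewrite lt_def N_ge0 andbT N_eq0; apply/eqP => /indep c00.
  move: Sc0; rewrite /Sph /= (_ : c0 = 0) ?normr0; first by move/eqP; rewrite eq_sym oner_eq0.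
  by apply/rowP => i; rewrite mxE c00.
exists (h c0)^-1; first by rewrite invr_gt0.
move=> d i.
pose u : 'rV[R]_m.+1 := \row_i d i.
have hu : h u = N (L f d) by rewrite /h; congr (N (L f _)); apply/funext => j; rewrite mxE.
have [u0|u0] := eqVneq u 0.
  have -> : d i = 0 by have := congr1 (fun w : 'rV[R]_m.+1 => w ord0 i) u0; rewrite !mxE.
  by rewrite normr0 mulr_ge0 ?N_ge0 // invr_ge0 ltW.
have nu0 : 0 < `|u| by rewrite normr_gt0.
have Sv : Sph (`|u|^-1 *: u).
  by rewrite /Sph /= normrZ ger0_norm ?invr_ge0 ?normr_ge0 // mulVf ?gt_eqF.
have := c0min _ (mem_set Sv).
have -> : h (`|u|^-1 *: u) = `|u|^-1 * h u.
  rewrite /h (_ : (fun i => _) = (fun i => `|u|^-1 * u ord0 i)); last first.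
    by apply/funext => j; rewrite mxE.
  by rewrite LZ NZ nrm_io ger0_norm ?invr_ge0 ?normr_ge0.
rewrite hu => hle2.
have e1 : `|d i| <= `|u| by have := rV_entry_le u i; rewrite mxE.
apply: le_trans e1 _.
have h3 : h c0 * `|u| <= N (L f d).
  by rewrite -ler_pdivlMr // mulrC.
rewrite -(ler_pM2l al0) mulrA mulfV ?gt_eqF // mul1r.
exact: h3.
Qed.

Lemma coord_bound m (f : 'I_m -> V) : exists2 b : R, 0 < b &
  forall d, exists c, L f c = L f d /\ forall i, `|c i| <= b * N (L f d).
Proof.
elim: m f => [|m IH] f.
  by exists 1 => // d; exists d; split => // -[].
case: (pselect (exists c : 'I_m.+1 -> R, (exists j, c j != 0) /\ L f c = 0))
  => [[c0 [[j cj] Lc0]]|nodep]; last first.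
  have indep : forall c, L f c = 0 -> forall i, c i = 0.
    move=> c Lc i; apply/eqP/negPn/negP => ci; apply: nodep; exists c.
    by split => //; exists i.
  have [b b0 hb] := indep_bound indep.
  by exists b => // d; exists d; split.
pose g := fun i => f (lift j i).
have [b b0 hb] := IH g.
exists b => // d.
pose d' := fun i => d (lift j i) - d j * (c0 (lift j i) / c0 j).
have ioj : io (c0 j) != 0 by rewrite fmorph_eq0.
have eqL : L f d = L g d'.
  rewrite /L in Lc0 *; rewrite (bigD1_ord j) //= in Lc0.
  have fj : f j = - \sum_(i < m) io (c0 (lift j i) / c0 j) *: f (lift j i).
    have := congr1 (fun v => (io (c0 j))^-1 *: v) Lc0.
    rewrite scalerDr scalerA mulVf // scale1r scaler0 => /eqP.
    rewrite addr_eq0 => /eqP ->; congr (- _); rewrite scaler_sumr.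
    by apply: eq_bigr => i _; rewrite scalerA rmorphM fmorphV mulrC.
  rewrite (bigD1_ord j) //= fj scalerN scaler_sumr addrC -sumrB; apply: eq_bigr => i _.
  by rewrite /d' /g rmorphB scalerBl scalerA -rmorphM.
have [c' [Lc' hc']] := hb d'.
exists (fun i => if unlift j i is Some k then c' k else 0); split.
  rewrite eqL -Lc' /L (bigD1_ord j) //= unlift_none rmorph0 scale0r add0r.
  by apply: eq_bigr => i _; rewrite liftK.
move=> i; rewrite eqL; case: (unlift j i) => [k|]; first exact: hc'.
by rewrite normr0 mulr_ge0 ?N_ge0 // ltW.
Qed.
End Coord.

Section Sup.
Variables V W : normedModType K.

Definition rlin (T : V -> W) := forall r x y, T (io r *: x + y) = io r *: T x + T y.
Definition lin (T : V -> W) := forall (a : K) x y, T (a *: x + y) = a *: T x + T y.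

Lemma lin_rlin T : lin T -> rlin T. Proof. by move=> h r; apply: h. Qed.

Lemma rlin0 T : rlin T -> T 0 = 0.
Proof.
move=> h; have := h 1 0 0; rewrite rmorph1 !scale1r addr0 => e.
by have := congr1 (fun v => v - T 0) e; rewrite subrr addrK.
Qed.

Lemma rlinZ T r x : rlin T -> T (io r *: x) = io r *: T x.
Proof. by move=> h; have := h r x 0; rewrite addr0 rlin0 // addr0. Qed.

Lemma lin0 T : lin T -> T 0 = 0. Proof. by move/lin_rlin/rlin0. Qed.
Lemma linZ T a x : lin T -> T (a *: x) = a *: T x.
Proof. by move=> h; have := h a x 0; rewrite addr0 lin0 // addr0. Qed.
Lemma linD T x y : lin T -> T (x + y) = T x + T y.
Proof. by move=> h; have := h 1 x y; rewrite !scale1r. Qed.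
Lemma linB T x y : lin T -> T (x - y) = T x - T y.
Proof.
move=> h; have := h (-1) y x; rewrite !scaleN1r addrC => ->; by rewrite addrC.
Qed.

Lemma opnorm_le (T : V -> W) s : rlin T -> opnorm_is T s -> forall x, `|T x| <= s * `|x|.
Proof.
move=> hl [ub _] x; have [->|x0] := eqVneq x 0.
  by rewrite rlin0 // !normr0 mulr0.
have a0 : 0 < N x by rewrite lt_def N_eq0 x0 N_ge0.
have ioa0 : 0 < io (N x) by rewrite -(rmorph0 io) hlt.
have ai0 : 0 <= (N x)^-1 by rewrite invr_ge0 ltW.
have hy : `|T (io (N x)^-1 *: x)| <= s.
  apply: ub; exists (io (N x)^-1 *: x) ; last by [].
  rewrite /= NE NZ nrm_io (ger0_norm ai0) (mulVf (lt0r_neq0 a0)) rmorph1.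
  exact: lexx.
move: hy; rewrite rlinZ // normrZ fmorphV ger0_norm; last by rewrite invr_ge0 ltW.
by rewrite mulrC -ler_pdivlMr ?invr_gt0 // invrK -NE.
Qed.

Lemma opnorm_ex (T : V -> W) B : 0 <= B -> (forall x, N (T x) <= B * N x) ->
  exists s, s <= B /\ opnorm_is T (io s).
Proof.
move=> B0 hB.
pose E := [set r : R | exists2 x : V, N x <= 1 & r = N (T x)]%classic.
have E0 : (E !=set0)%classic by exists (N (T 0)); exists 0 => //; rewrite N0 ler01.
have Eub : ubound E B.
  move=> _ [x x1 ->]; apply: le_trans (hB x) _.
  by rewrite ler_piMr.
have hs : has_sup E by split => //; exists B.
exists (sup E); split; first exact: ge_sup.
split.
  move=> _ [x x1 <-]; rewrite NE hle; apply: sup_upper_bound => //.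
  by exists x => //; rewrite -hle rmorph1 -NE.
move=> e e0; have e' : 0 < nrm e by rewrite -hlt rmorph0 hn normr_gt0 gt_eqF.
have [r [x x1 ->] hr] := sup_adherent e' hs.
exists `|T x|; first by exists x => //; rewrite /= NE -(rmorph1 io) hle.
by rewrite NE (nrm_pos e0) -rmorphB hlt.
Qed.

End Sup.

Lemma is_sup_scale (S S' : set K) s l : 0 < l ->
  (forall y, S' y <-> exists2 z, S z & y = l * z) -> is_sup S s -> is_sup S' (l * s).
Proof.
move=> l0 hS [ub ap]; split.
  by move=> y /hS [z Sz ->]; rewrite ler_pM2l // ub.
move=> e e0; have [z Sz hz] := ap (e / l) (divr_gt0 e0 l0).
exists (l * z); first by apply/hS; exists z.
have := hz; rewrite -(ltr_pM2l l0) mulrBr mulrCA mulfV ?gt_eqF // mulr1.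
by [].
Qed.

Lemma small_le (r a C : R) : 0 <= C -> (forall d, 0 < d -> r <= a + d * C) -> r <= a.
Proof.
move=> C0 h; apply/ler_addgt0Pr => e e0.
apply: le_trans (h (e / (C + 1)) _) _; first by rewrite divr_gt0 // ltr_wpDl.
rewrite lerD2l -ler_pdivlMl ?divr_gt0 ?ltr_wpDl // invf_div mulrC.
by rewrite mulrCA mulfV ?gt_eqF // mulr1 lerDl ler01.
Qed.

Section Main.
Variables (X : normedModType K) (m : nat) (f : 'I_m -> X) (b : R) (crd : X -> 'I_m -> R).
Hypotheses (b0 : 0 < b) (hcrd : forall x, x = L f (crd x))
  (hcb : forall x i, `|crd x i| <= b * N x).

Definition Fs := \sum_(i < m) N (f i).
Lemma Fs_ge0 : 0 <= Fs. Proof. by apply: sumr_ge0 => i _; exact: N_ge0. Qed.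

Lemma rlinL (W : normedModType K) (T : X -> W) c : rlin T ->
  T (L f c) = \sum_(j < m) io (c j) *: T (f j).
Proof.
move=> hT; rewrite /L; elim/big_rec2: _ => [|i y1 y2 _ <-]; first exact: rlin0.
by rewrite hT.
Qed.

Lemma rlin_bound (W : normedModType K) (T : X -> W) : rlin T ->
  forall x, N (T x) <= (b * \sum_(j < m) N (T (f j))) * N x.
Proof.
move=> hT x; rewrite {1}[x]hcrd rlinL //; apply: le_trans (N_sum _ _) _.
rewrite mulrC mulrA mulr_sumr; apply: ler_sum => j _; rewrite NZ nrm_io.
by apply: ler_wpM2r; [exact: N_ge0|]; rewrite mulrC hcb.
Qed.

Definition Sop (M : 'I_m -> 'I_m -> R) (y : X) :=
  \sum_(j < m) io (crd y j) *: L f (fun i => M i j).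

Lemma SopB M M' y : Sop M y - Sop M' y = Sop (fun i j => M i j - M' i j) y.
Proof.
rewrite /Sop -sumrB; apply: eq_bigr => j _; by rewrite -scalerBr LB.
Qed.

Lemma Sop_bound M d y : 0 <= d -> (forall i j, `|M i j| <= d) ->
  N (Sop M y) <= (b * Fs * m%:R) * d * N y.
Proof.
move=> d0 hM; apply: le_trans (N_sum _ _) _.
apply: le_trans (_ : \sum_(j < m) (b * N y) * (d * Fs) <= _).
  apply: ler_sum => j _; rewrite NZ nrm_io; apply: ler_pM => //; first exact: N_ge0.
  apply: le_trans (L_bound _ _) _; rewrite /Fs mulr_sumr; apply: ler_sum => i _.
  by apply: ler_wpM2r; [exact: N_ge0| exact: hM].
rewrite sumr_const card_ord -mulr_natr.
rewrite le_eqVlt; apply/orP; left; apply/eqP; ring.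
Qed.

Lemma T_Sop (T : X -> X) : rlin T -> forall y, T y = Sop (fun i j => crd (T (f j)) i) y.
Proof.
move=> hT y; rewrite {1}[y]hcrd rlinL //; apply: eq_bigr => j _.
by rewrite -hcrd.
Qed.

Lemma unif_bound : numindex_pos X -> exists B, 0 <= B /\ forall T : X -> X, bounded_linear T ->
  numrad_is T 1 -> forall x, N (T x) <= B * N x.
Proof.
move=> [c c0 hc]; have nc0 : 0 < nrm c by rewrite -hlt rmorph0 -nrm_pos.
exists (nrm c)^-1; split; first by rewrite invr_ge0 ltW.
move=> T [lT _] [ubT apT] x.
have rT := lin_rlin lT.
have B00 : 0 <= b * \sum_(j < m) N (T (f j)).
  by apply: mulr_ge0; [exact: ltW| apply: sumr_ge0 => j _; exact: N_ge0].
have [s [_ os]] := opnorm_ex B00 (rlin_bound rT).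
have Tle : forall x, N (T x) <= s * N x.
  by move=> y; have := opnorm_le rT os y; rewrite !NE -rmorphM hle.
have s0 : 0 < s.
  have [y [q [q1 [[lq _] [oq _]]] <-] hy] := apT 1 ltr01.
  have Nq1 : N q.1 = 1 by rewrite /N q1 nrm1.
  move: hy; rewrite subrr NE -(rmorph0 io) hlt => hy.
  have := opnorm_le (lin_rlin lq) oq (T q.1); rewrite mul1r !NE hle => h1.
  have := Tle q.1; rewrite Nq1 mulr1 => h2.
  exact: lt_le_trans hy (le_trans h1 h2).
have ios0 : 0 < io s^-1 by rewrite -(rmorph0 io) hlt invr_gt0.
pose T' x := io s^-1 *: T x.
have nT' : forall y, `|T' y| = io s^-1 * `|T y|.
  by move=> y; rewrite normrZ gtr0_norm.
have lT' : bounded_linear T'.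
  split.
    by move=> a u v; rewrite /T' lT scalerDr !scalerA mulrC.
  exists 1 => y; rewrite mul1r nT' !NE -rmorphM hle.
  rewrite -ler_pdivlMl ?invr_gt0 // invrK; exact: Tle.
have oT' : opnorm_is T' 1.
  have -> : (1 : K) = io s^-1 * io s by rewrite -rmorphM mulVf ?gt_eqF // rmorph1.
  apply: (is_sup_scale ios0 _ os) => y; split.
    by move=> [u hu <-]; exists `|T u|; [exists u|rewrite nT'].
  by move=> [_ [u hu <-] ->]; exists u => //; rewrite nT'.
have nrT' : numrad_is T' (io s^-1).
  rewrite -[io s^-1]mulr1.
  apply: (is_sup_scale ios0 _ (conj ubT apT)) => y; split.
    move=> [q hq <-]; exists `|q.2 (T q.1)|; [by exists q|].
    by case: hq => _ [[lq _] _]; rewrite /T' (linZ _ _ lq) normrZ (gtr0_norm ios0).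
  move=> [_ [q hq <-] ->]; exists q => //.
  by case: hq => _ [[lq _] _]; rewrite /T' (linZ _ _ lq) normrZ (gtr0_norm ios0).
have hcs0 := hc T' _ lT' oT' nrT'.
have hcs : nrm c <= s^-1 by rewrite -hle -(nrm_pos c0).
apply: le_trans (Tle x) _; apply: ler_wpM2r; first exact: N_ge0.
have : s * nrm c <= 1.
  by move: hcs; rewrite -[nrm c <= _](ler_pM2l s0) mulfV ?gt_eqF.
by rewrite -ler_pdivlMr // div1r.
Qed.

Lemma main_gen : numindex_pos X -> Lpp_nu X.
Proof.
move=> nX; have [B [B0 hB]] := unif_bound nX.
move=> eps e0 p pP; have [px1 [[lph _] [oph phx]]] := pP.
have Pib : forall q : X * (X -> K^o), Pi q -> forall z, N (q.2 z) <= N z.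
  move=> q [_ [[lq _] [oq _]]] z.
  by have := opnorm_le (lin_rlin lq) oq z; rewrite mul1r !NE hle.
have Pil : forall q : X * (X -> K^o), Pi q -> lin q.2.
  by move=> q [_ [[lq _] _]].
have Pi1 : forall q : X * (X -> K^o), Pi q -> N q.1 = 1.
  by move=> q [q1 _]; rewrite /N q1 nrm1.
apply: contrapT => neg.
pose good (T : X -> X) := exists S : X -> X, [/\ bounded_linear S, numrad_is S 1,
        `|p.2 (S p.1)| = 1 &
        exists2 s : K, opnorm_is (fun x => S x - T x) s & s < eps].
have exT : forall k : nat, exists T : X -> X, [/\ bounded_linear T, numrad_is T 1,
   1 - io (k.+1%:R^-1) < `|p.2 (T p.1)| & ~ good T].
  move=> k; apply: contrapT => nT; apply: neg; exists (io (k.+1%:R^-1)).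
    by rewrite -(rmorph0 io) hlt invr_gt0 ltr0Sn.
  move=> T bT nT1 hT; apply: contrapT => nS; apply: nT; exists T; split => //.
have [Tk hTk] := choice exT.
have lTk k : lin (Tk k) by case: (hTk k) => -[].
have rTk k : rlin (Tk k) := lin_rlin (lTk k).
have nTk k : numrad_is (Tk k) 1 by case: (hTk k).
have bTk k x : N (Tk k x) <= B * N x by case: (hTk k) => bT nT _ _; exact: hB.
pose Q := b * B * Fs.
pose wk k : 'rV[R]_(m * m) := mxvec (\matrix_(i, j) crd (Tk k (f j)) i).
have wkE k i j : wk k ord0 (mxvec_index i j) = crd (Tk k (f j)) i.
  by rewrite /wk -[ord0]/(0 : 'I_1) mxvecE mxE.
pose C := [set v : 'rV[R]_(m * m) | forall i, (`[(- Q), Q]%classic : set R) (v ord0 i)]%classic.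
have Cc : compact C.
  by rewrite /C; apply: (@rV_compact _ _ (fun=> `[(- Q), Q]%classic)) => _; exact: segment_compact.
pose F := (wk @ \oo)%classic.
have Cwk : forall k, C (wk k).
  move=> k i; case/mxvec_indexP: i => i j; rewrite wkE.
  rewrite /= in_itv /= -ler_norml; apply: le_trans (hcb _ _) _.
  rewrite /Q -mulrA ler_pM2l //; apply: le_trans (bTk _ _) _.
  apply: ler_wpM2l => //; rewrite /Fs (bigD1 j) //= lerDl.
  by apply: sumr_ge0 => i' _; exact: N_ge0.
have FC : F C by exact: (@filterE nat eventually _ (wk @^-1` C)%classic Cwk).
have [winf [Cw clw]] := Cc F _ FC.
have close : forall d, 0 < d -> forall N0, exists2 k, (N0 <= k)%N & `|wk k - winf| < d.
  move=> d d0 N0.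
  have := clw [set wk k | k in [set k | (N0 <= k)%N]]%classic (ball winf d) _ (nbhsx_ballx _ _ d0).
  case.
    by exists N0 => // k /= hk; exists k.
  move=> _ [[k hk <-]]; rewrite -ball_normE /= distrC => hd.
  by exists k.
pose Winf i j := winf ord0 (mxvec_index i j).
pose S := Sop Winf.
have TkS k y : Tk k y = Sop (fun i j => crd (Tk k (f j)) i) y := T_Sop (rTk k) y.
pose G := b * Fs * m%:R.
have G0 : 0 <= G by apply: mulr_ge0; [apply: mulr_ge0; [exact: ltW|exact: Fs_ge0]|exact: ler0n].
have SmT : forall d k, 0 <= d -> `|wk k - winf| <= d ->
    forall y, N (S y - Tk k y) <= G * d * N y.
  move=> d k d0 hk y; rewrite TkS SopB; apply: Sop_bound => // i j.
  rewrite /Winf -wkE.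
  have -> : winf ord0 (mxvec_index i j) - wk k ord0 (mxvec_index i j)
      = (winf - wk k) ord0 (mxvec_index i j) by rewrite !mxE.
  by apply: le_trans (rV_entry_le _ _) _; rewrite distrC.
have lS : lin S.
  move=> a x y; apply/eqP; rewrite -subr_eq0 -(N_eq0 (V:=X)) eq_le N_ge0 andbT.
  have C0 : 0 <= G * (N (a *: x + y) + nrm a * N x + N y).
    by rewrite mulr_ge0 // !addr_ge0 ?mulr_ge0 ?N_ge0 ?nrm_ge0.
  apply: (small_le C0) => d d0.
  have [k _ hk] := close d d0 0%N.
  have hk' := ltW hk; have d0' := ltW d0.
  rewrite (zid _ _ _ (a *: Tk k x) (Tk k y)) -(lTk k) -scalerBr.
  apply: le_trans (NB _ _) _; rewrite add0r.
  apply: le_trans (lerD (SmT _ _ d0' hk' _) (ND _ _)) _.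
  rewrite NZ.
  apply: le_trans (lerD (lexx _) (lerD (ler_wpM2l (nrm_ge0 a) (SmT _ _ d0' hk' x))
    (SmT _ _ d0' hk' y))) _.
  by rewrite le_eqVlt; apply/orP; left; apply/eqP; ring.
have bS : bounded_linear S.
  split => //; exists (io (G * `|winf|)) => y.
  rewrite !NE -rmorphM hle; apply: Sop_bound => // i j.
  exact: rV_entry_le.
have ubS : forall q, Pi q -> N (q.2 (S q.1)) <= 1.
  move=> q hq; apply: (@small_le _ _ G) => // d d0.
  have [k _ hk] := close d d0 0%N.
  have h1 : N (q.2 (Tk k q.1)) <= 1.
    case: (nTk k) => ub _; rewrite -hle rmorph1 -NE; apply: ub; by exists q.
  have -> : q.2 (S q.1) = q.2 (Tk k q.1) + q.2 (S q.1 - Tk k q.1).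
    by rewrite (linB _ _ (Pil _ hq)) addrC subrK.
  apply: le_trans (ND _ _) _; apply: lerD => //.
  apply: le_trans (Pib _ hq _) _; apply: le_trans (SmT _ _ (ltW d0) (ltW hk) _) _.
  by rewrite Pi1 // mulr1 mulrC.
have Sx0 : N (p.2 (S p.1)) = 1.
  apply/eqP; rewrite eq_le ubS //=.
  apply: (@small_le _ _ (1 + G)); first by rewrite addr_ge0 // ler01.
  move=> d d0.
  pose N0 := Num.trunc (d^-1).
  have [k hk1 hk] := close d d0 N0.
  have hT : 1 - (k.+1%:R)^-1 < N (p.2 (Tk k p.1)).
    case: (hTk k) => _ _ h _; move: h.
    by rewrite NE -(rmorph1 io) -rmorphB hlt.
  have hinv : (k.+1%:R)^-1 <= d :> R.
    apply: le_trans (_ : (N0.+1%:R)^-1 <= d) .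
      by rewrite lef_pV2 ?posrE ?ltr0Sn // ler_nat.
    rewrite -[d]invrK ltW // ltf_pV2 ?posrE ?invr_gt0 ?ltr0Sn //.
    exact: truncnS_gt.
  have hd : N (p.2 (Tk k p.1)) <= N (p.2 (S p.1)) + G * d.
    have -> : p.2 (Tk k p.1) = p.2 (S p.1) - p.2 (S p.1 - Tk k p.1).
      by rewrite (linB _ _ lph) opprB addrC subrK.
    apply: le_trans (NB _ _) _; apply: lerD => //.
    apply: le_trans (Pib _ pP _) _; apply: le_trans (SmT _ _ (ltW d0) (ltW hk) _) _.
    by rewrite Pi1 // mulr1.
  have := lt_le_trans hT hd; rewrite ltrBlDr => h2.
  apply: le_trans (ltW h2) _.
  by rewrite -addrA lerD2l mulrDr mulr1 mulrC addrC lerD2r.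
have nS : numrad_is S 1.
  split.
    by move=> _ [q hq <-]; rewrite NE -(rmorph1 io) hle; exact: ubS.
  move=> e e0'; exists `|p.2 (S p.1)|; first by exists p.
  by rewrite NE Sx0 rmorph1 gtrBl.
have ne0 : 0 < nrm eps by rewrite -hlt rmorph0 -nrm_pos.
pose d := nrm eps / (G + 1).
have G1 : 0 < G + 1 by rewrite ltr_wpDl.
have d0 : 0 < d by rewrite divr_gt0.
have [k _ hk] := close d d0 0%N.
case: (hTk k) => _ _ _; apply.
exists S; split => //.
  by rewrite NE Sx0 rmorph1.
have Gd0 : 0 <= G * d by rewrite mulr_ge0 // ltW.
have [sg [hsg osg]] := opnorm_ex Gd0 (SmT _ _ (ltW d0) (ltW hk)).
exists (io sg) => //.
rewrite (nrm_pos e0) hlt; apply: le_lt_trans hsg _.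
by rewrite /d mulrCA gtr_pMr // ltr_pdivrMr // mul1r ltrDl ltr01.
Qed.

End Main.

End Gen.

Lemma main_span (R : realType) (K : numFieldType) (io : {rmorphism R -> K}) (nrm : K -> R)
  (hle : forall a b, (io a <= io b) = (a <= b)) (hn : forall k, io (nrm k) = `|k|)
  (X : normedModType K) m (f : 'I_m -> X) :
  (forall x, exists c, x = L io f c) -> numindex_pos X -> Lpp_nu X.
Proof.
move=> hspan.
have [b b0 hb] := coord_bound hle hn f.
have : forall x, exists c, x = L io f c /\ forall i, `|c i| <= b * N nrm x.
  move=> x; have [d ->] := hspan x; have [c [e1 e2]] := hb d.
  by exists c; split.
move=> /choice [crd hcrd].
apply: (main_gen hle hn b0 (f := f) (crd := crd)).
  by move=> x; case: (hcrd x).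
by move=> x; case: (hcrd x).
Qed.

Theorem proposition3p3 (R : realType) :
  (forall X : completeNormedModType R,
     finite_dim X -> numindex_pos X -> Lpp_nu X) /\
  (forall X : completeNormedModType R[i],
     finite_dim X -> numindex_pos X -> Lpp_nu X).
Proof.
split.
  move=> X [n [e he]].
  apply (@main_span R R idfun (fun k => `|k|) (fun a b => erefl) (fun k => erefl) X n e).
  by move=> x; have [c hc] := he x; exists c.
move=> X [n [e he]].
have hle : forall a b : R, ((a%:C)%C <= (b%:C)%C :> R[i]) = (a <= b) := @lecR R.
have hn : forall k : R[i], ((complex.Re `|k|)%:C)%C = `|k|.
  move=> k; rewrite [in RHS](complexE `|k|) ger0_Im ?normr_ge0 //.
  by rewrite mulr0 addr0.
pose f (k : 'I_(n + n)) : X := match fintype.split k with inl i => e i | inr i => 'i%C *: e i end.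
apply (@main_span R R[i] (real_complex R) (fun k => complex.Re `|k|) hle hn X _ f).
move=> x; have [c hc] := he x.
exists (fun k => match fintype.split k with inl i => complex.Re (c i) | inr i => complex.Im (c i) end).
rewrite hc /L big_split_ord /= -big_split /=; apply: eq_bigr => i _.
rewrite /f (unsplitK (inl _ i)) (unsplitK (inr _ i)) scalerA -scalerDl.
by rewrite mulrC -complexE.
Qed.
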